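(* In the cylindrical dual-RSK algorithm (with fixed $N\ge1$, $L$, $L-N\ge1$), let $w_1<w_2$ be entries of $\{1,\dots,N\}$ that are column-inserted successively (first $w_1$, then $w_2$) into a cylindrical infinite Young tableau during the same time step. Then it cannot happen that the insertion of $w_1$ is interior while the insertion of $w_2$ is cylindrical. In other words, among the insertions performed at a given time step, all the cylindrical insertions happen before the interior insertions.
   Context: Fix integers $N\ge1$, $L$ with $L-N\ge1$. Innovation data is a two-row array $\binom{a_1\,a_2\,\cdots}{b_1\,b_2\,\cdots}$ with $a_i\in\mathbb{N}$ nondecreasing, $b_i\in\{1,\dots,N\}$, and $b_i\le b_{i+1}$ whenever $a_i=a_{i+1}$. A cylindrical infinite Young tableau consists of a main tableau $\mathcal{P}_0$ (a filling of a Young diagram by positive integers, rows weakly increasing to the right, columns strictly increasing downward; columns have at most $N$ boxes, although entries of $\mathcal{P}_0$ may pass below row $N$ after an overflow) together with copies $\mathcal{P}_m$, $m\in\mathbb{Z}$: $\mathcal{P}_m$ is obtained from $\mathcal{P}_0$ by adding $mN$ to every entry and translating it $m(L-N)$ columns to the left and $mN$ rows down. If $\lambda=(\lambda_1\ge\dots\ge\lambda_N)$ are the row lengths of $\mathcal{P}_0$, there is an overflow of the first $k$ rows when $\lambda_1=\dots=\lambda_k=L-N+\lambda_N$. Cylindrical dual-RSK: starting from the empty tableau, at time $n$ the entries $b_i$ with $a_i=n$ are inserted in the order of the array. To insert $b$: in the current column of $\mathcal{P}_0$ (starting with the first), if every entry is strictly smaller than $b$, $b$ is appended at the end of the column; otherwise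 $b$ replaces the uppermost entry $w\ge b$ of the column and $w$ is inserted in the same way into the next column; this is done simultaneously in each copy $\mathcal{P}_m$ with the entry $b+mN$. When the first $k$ rows overflow and $1\le b\le k$, the insertion displaces a box of $\mathcal{P}_0$ into the period $\mathcal{P}_{-1}$, which may in turn displace a box into $\mathcal{P}_{-2}$, and so on (at most $N$ times); afterwards all copies are updated to agree with the new $\mathcal{P}_0$. A tableau $\mathcal{Q}$ records in each newly created box the time of its creation and a tableau $\mathcal{W}$ records the winding of the insertion path that created it (the number of times the insertion path crossed between periods). The insertion path of an insertion is the set of coordinates of boxes changed by it. An insertion path is interior if it did not move past the first row (did not cross between periods), and cylindrical otherwise. *)

(* Defs.v *)
(* Cylindrical dual-RSK, modelled on the periodic (global)
   picture of the cylindrical infinite Young tableau. *)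
From mathcomp Require Import all_boot all_order all_algebra.
Set Implicit Arguments. Unset Strict Implicit. Unset Printing Implicit Defensive.
Import Order.TTheory GRing.Theory Num.Theory.
Local Open Scope ring_scope.

(* The main tableau P_0, 0-based: [T r c] is the entry of P_0 in row r
   (0 <= r < N) and column c (c >= 0), or None if there is no box. *)
Definition tab := int -> int -> option int.

Definition empty_tab : tab := fun _ _ => None.

(* The global cell (i, j) belongs to the
   copy P_m with m = i div N; it is the cell (i mod N, j + m (L - N)) of P_0,
   with entry shifted by m N.  (P_m = P_0 translated m(L-N) columns to the
   left, m N rows down, entries + m N.) *)
Definition copy_of (N : nat) (i : int) : int := (i %/ N%:Z)%Z.

Definition gget (N L : nat) (T : tab) (i j : int) : option int :=
  let m := copy_of N i in
  let c := j + m * (L - N)%N%:Z in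
  if 0 <= c then omap (fun x => x + m * N%:Z) (T (i %% N%:Z)%Z c) else None.

(* Writing value v in the global cell (i, j): modifies P_0 (hence, by
   periodicity, all copies simultaneously). *)
Definition gset (N L : nat) (T : tab) (i j v : int) : tab :=
  let m := copy_of N i in
  fun r c => if (r == (i %% N%:Z)%Z) && (c == j + m * (L - N)%N%:Z)
             then Some (v - m * N%:Z) else T r c.

(* Top row of the global column j: first row of the copy P_m with m minimal
   such that column j of the global picture meets column >= 0 of P_m. *)
Definition col_top (N L : nat) (j : int) : int :=
  - (j %/ (L - N)%N%:Z)%Z * N%:Z.

Definition col_end (N L : nat) (T : tab) (j i : int) : Prop :=
  (forall i', gget N L T i' j <> None -> i' < i) /\
  (i = col_top N L j \/ gget N L T (i - 1) j <> None).

Inductive ins_from (N L : nat) : tab -> int -> int -> tab -> seq (int * int) -> Prop :=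
| ins_bump T v j i x T' p :
    gget N L T i j = Some x -> v <= x ->
    (forall i' y, i' < i -> gget N L T i' j = Some y -> y < v) ->
    ins_from N L (gset N L T i j v) x (j + 1) T' p ->
    ins_from N L T v j T' ((i, j) :: p)
| ins_append T v j i :
    (forall i' y, gget N L T i' j = Some y -> y < v) ->
    col_end N L T j i ->
    ins_from N L T v j (gset N L T i j v) [:: (i, j)].

Definition insert (N L : nat) (T : tab) (b : nat) (T' : tab) (p : seq (int * int)) :=
  ins_from N L T b%:Z 0 T' p.

Inductive run (N L : nat) : tab -> seq nat -> tab -> seq (seq (int * int)) -> Prop :=
| run_nil T : run N L T [::] T [::]
| run_cons T b bs T1 T2 p ps :
    insert N L T b T1 p -> run N L T1 bs T2 ps -> run N L T (b :: bs) T2 (p :: ps).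

(* Innovation data: the two-row array (a_i over b_i) as a list of pairs. *)
Definition innovation_data (N : nat) (d : seq (nat * nat)) : Prop :=
  (forall k, (k.+1 < size d)%N ->
     ((nth (0, 0) d k).1 <= (nth (0, 0) d k.+1).1)%N /\
     ((nth (0, 0) d k).1 = (nth (0, 0) d k.+1).1 ->
        ((nth (0, 0) d k).2 <= (nth (0, 0) d k.+1).2)%N)) /\
  (forall k, (k < size d)%N -> (0 < (nth (0, 0) d k).2 <= N)%N).

(* An insertion path is interior if it stays in the main period P_0 (global
   rows 0..N-1), i.e. never crosses between periods; cylindrical otherwise. *)
Definition interior (N : nat) (p : seq (int * int)) : bool :=
  all (fun ij => (0 <= ij.1) && (ij.1 < N%:Z)) p.

Definition cylindrical (N : nat) (p : seq (int * int)) : bool := ~~ interior N p.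

(* Main.v *)
Require Import Defs.
From mathcomp Require Import all_boot all_order all_algebra.
From mathcomp Require Import zify ring lra.
Set Implicit Arguments. Unset Strict Implicit. Unset Printing Implicit Defensive.
Import Order.TTheory GRing.Theory Num.Theory.
Local Open Scope ring_scope.

Definition Kz (N L : nat) : int := (L - N)%N%:Z.

Lemma gget_shift N L T i j d : (0 < N)%N ->
  gget N L T (i + d * N%:Z) (j - d * Kz N L) =
  omap (fun x => x + d * N%:Z) (gget N L T i j).
Proof.
move=> hN; have hN0 : N%:Z != 0 by rewrite eqz_nat -lt0n.
rewrite /gget /copy_of /Kz (addrC i) divzMDl // modzMDl.
have -> : j - d * (L - N)%N%:Z + (d + (i %/ N%:Z)%Z) * (L - N)%N%:Z =
          j + (i %/ N%:Z)%Z * (L - N)%N%:Z by ring.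
case: ifP => // _; case: (T _ _) => //= x; congr Some; ring.
Qed.

Lemma gget_gset_base N L T i j v : (0 < N)%N ->
  0 <= j + (i %/ N%:Z)%Z * Kz N L ->
  gget N L (gset N L T i j v) i j = Some v.
Proof.
move=> hN hr; rewrite /gget /gset /copy_of -/(Kz N L) hr /= !eqxx /=.
congr Some; ring.
Qed.

Lemma gget_gset_orb N L T i j v d : (0 < N)%N ->
  0 <= j + (i %/ N%:Z)%Z * Kz N L ->
  gget N L (gset N L T i j v) (i + d * N%:Z) (j - d * Kz N L) = Some (v + d * N%:Z).
Proof.
by move=> hN hr; rewrite gget_shift // gget_gset_base.
Qed.

Lemma gget_gset_other N L T i j v i' j' : (0 < N)%N ->
  (forall d, ~ (i' = i + d * N%:Z /\ j' = j - d * Kz N L)) ->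
  gget N L (gset N L T i j v) i' j' = gget N L T i' j'.
Proof.
move=> hN hd; rewrite /gget /gset /copy_of -/(Kz N L).
case: ifP => // _ /=.
case: ifP => // /andP [/eqP h1 /eqP h2].
exfalso; apply: (hd ((i' %/ N%:Z)%Z - (i %/ N%:Z)%Z)); split.
  rewrite {1}(divz_eq i' N%:Z) h1; have := divz_eq i N%:Z; nia.
have : j' = j + (i %/ N%:Z)%Z * Kz N L - (i' %/ N%:Z)%Z * Kz N L.
  by rewrite -h2; ring.
by move=> ->; ring.
Qed.

Lemma divz_facts (m : int) (d : nat) : (0 < d)%N ->
  m = (m %/ d%:Z)%Z * d%:Z + (m %% d%:Z)%Z /\ 0 <= (m %% d%:Z)%Z /\ (m %% d%:Z)%Z < d%:Z.
Proof.
move=> hd; split; first exact: divz_eq.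
split; first by apply: modz_ge0; rewrite eqz_nat -lt0n.
by apply: ltz_pmod; rewrite ltz_nat.
Qed.

Definition ctop N L j := col_top N L j.

Lemma gget_reg N L T i j x : gget N L T i j = Some x -> 0 <= j + (i %/ N%:Z)%Z * Kz N L.
Proof. by rewrite /gget /copy_of; case: ifP. Qed.

Lemma reg_ctop N L i j : (0 < N)%N -> (0 < L - N)%N ->
  0 <= j + (i %/ N%:Z)%Z * Kz N L -> ctop N L j <= i.
Proof.
move=> hN hK; rewrite /ctop /col_top /Kz => h.
have [e1 [e2 e3]] := divz_facts i hN.
have [f1 [f2 f3]] := divz_facts j hK.
move: h e1 e2 e3 f1 f2 f3.
move: (i %/ N%:Z)%Z (i %% N%:Z)%Z (j %/ (L-N)%N%:Z)%Z (j %% (L-N)%N%:Z)%Z => a r b s.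
have hK' : 0 < (L - N)%N%:Z by rewrite ltz_nat.
have hN' : 0 < N%:Z by rewrite ltz_nat.
move: (L - N)%N%:Z hK' (N%:Z) hN' => k hk n hn h e1 e2 e3 f1 f2 f3.
have : 0 < (a + b + 1) * k by nia.
move=> h2; have : a + b + 1 > 0 by nia.
move=> h3; nia.
Qed.

Lemma ctop_reg N L i j : (0 < N)%N -> (0 < L - N)%N ->
  ctop N L j <= i -> 0 <= j + (i %/ N%:Z)%Z * Kz N L.
Proof.
move=> hN hK; rewrite /ctop /col_top /Kz => h.
have [e1 [e2 e3]] := divz_facts i hN.
have [f1 [f2 f3]] := divz_facts j hK.
move: h e1 e2 e3 f1 f2 f3.
move: (i %/ N%:Z)%Z (i %% N%:Z)%Z (j %/ (L-N)%N%:Z)%Z (j %% (L-N)%N%:Z)%Z => a r b s.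
have hK' : 0 < (L - N)%N%:Z by rewrite ltz_nat.
have hN' : 0 < N%:Z by rewrite ltz_nat.
move: (L - N)%N%:Z hK' (N%:Z) hN' => k hk n hn h e1 e2 e3 f1 f2 f3.
have : - b * n < (a + 1) * n by nia.
move=> h2; have : a + b >= 0 by nia.
move=> h3; nia.
Qed.

Lemma gget_ctop N L T i j x : (0 < N)%N -> (0 < L - N)%N ->
  gget N L T i j = Some x -> ctop N L j <= i.
Proof. by move=> hN hK /gget_reg; apply: reg_ctop. Qed.

Lemma ctop_succ N L j : (0 < L - N)%N -> ctop N L (j + 1) <= ctop N L j.
Proof.
move=> hK; rewrite /ctop /col_top.
have [e1 [e2 e3]] := divz_facts j hK.
have [f1 [f2 f3]] := divz_facts (j + 1) hK.
move: e1 e2 e3 f1 f2 f3.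
move: (j %/ (L-N)%N%:Z)%Z (j %% (L-N)%N%:Z)%Z ((j + 1) %/ (L-N)%N%:Z)%Z ((j+1) %% (L-N)%N%:Z)%Z => a r b s.
have hK' : 0 < (L - N)%N%:Z by rewrite ltz_nat.
move: (L - N)%N%:Z hK' => k hk e1 e2 e3 f1 f2 f3.
have : a * k < (b + 1) * k by nia.
move=> h; have : a <= b by nia.
move=> h2; have : 0 <= N%:Z by []. nia.
Qed.

Lemma ctop_shift N L j d : (0 < L - N)%N ->
  ctop N L (j - d * Kz N L) = ctop N L j + d * N%:Z.
Proof.
move=> hK; rewrite /ctop /col_top /Kz.
have hK0 : (L - N)%N%:Z != 0 by rewrite eqz_nat -lt0n.
have -> : j - d * (L - N)%N%:Z = (- d) * (L - N)%N%:Z + j by ring.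
by rewrite divzMDl //; ring.
Qed.

Lemma gget_m1 N L T i : (0 < N)%N -> (0 < L - N)%N -> i < N%:Z -> gget N L T i (-1) = None.
Proof.
move=> hN hK hi; case E: (gget _ _ _ _ _) => [x|] //.
have := gget_ctop hN hK E; rewrite /ctop /col_top.
have -> : ((-1) %/ (L - N)%N%:Z)%Z = -1.
  have [f1 [f2 f3]] := divz_facts (-1) hK.
  move: f1 f2 f3; move: ((-1) %/ (L-N)%N%:Z)%Z ((-1) %% (L-N)%N%:Z)%Z => a r.
  have hK' : 0 < (L - N)%N%:Z by rewrite ltz_nat.
  move: (L - N)%N%:Z hK' => k hk f1 f2 f3; nia.
lia.
Qed.

Record Inv N L T : Prop := {
  i_pos : forall i j x, gget N L T i j = Some x -> (i %/ N%:Z)%Z * N%:Z < x;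
  i_cs : forall a b j x y, a < b -> gget N L T a j = Some x -> gget N L T b j = Some y -> x < y;
  i_rw : forall i j x y, gget N L T i j = Some x -> gget N L T i (j + 1) = Some y -> x <= y;
  i_cc : forall a b j, ctop N L j <= a -> a <= b -> gget N L T b j != None -> gget N L T a j != None;
  i_sh : forall i j, ctop N L j <= i -> gget N L T i (j + 1) != None -> gget N L T i j != None
}.

Lemma orbit_cases N L i j i0 j0 : (0 < N)%N ->
  (exists d, i0 = i + d * N%:Z /\ j0 = j - d * Kz N L) \/
  (forall d, ~ (i0 = i + d * N%:Z /\ j0 = j - d * Kz N L)).
Proof.
move=> hN; have hN0 : N%:Z != 0 by rewrite eqz_nat -lt0n.
case h: (((i0 %% N%:Z)%Z == (i %% N%:Z)%Z) && (j0 + (i0 %/ N%:Z)%Z * Kz N L == j + (i %/ N%:Z)%Z * Kz N L)).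
  move/andP: h => [/eqP h1 /eqP h2]; left.
  exists ((i0 %/ N%:Z)%Z - (i %/ N%:Z)%Z); split.
    rewrite {1}(divz_eq i0 N%:Z) h1; have := divz_eq i N%:Z; nia.
  have : j0 = j + (i %/ N%:Z)%Z * Kz N L - (i0 %/ N%:Z)%Z * Kz N L by rewrite -h2; ring.
  by move=> ->; ring.
right=> d [e1 e2]; move: h; rewrite e1 e2 (addrC i) divzMDl // modzMDl eqxx /=.
have -> : j - d * Kz N L + (d + (i %/ N%:Z)%Z) * Kz N L = j + (i %/ N%:Z)%Z * Kz N L by ring.
by rewrite eqxx.
Qed.

Lemma gget_gset_col N L T i j v b d : (0 < N)%N -> (0 < L - N)%N ->
  b - d * N%:Z != i ->
  gget N L (gset N L T i j v) b (j - d * Kz N L) =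
  omap (fun x => x + d * N%:Z) (gget N L T (b - d * N%:Z) j).
Proof.
move=> hN hK hb.
have -> : b = (b - d * N%:Z) + d * N%:Z by ring.
rewrite gget_shift //; have -> : b - d * N%:Z + d * N%:Z - d * N%:Z = b - d * N%:Z by ring.
rewrite gget_gset_other //; move=> d' [e1 e2].
have hK' : 0 < Kz N L by rewrite ltz_nat.
have : d' = 0 by nia.
by move=> h0; move: hb; rewrite e1 h0 mul0r addr0 eqxx.
Qed.

Lemma gget_gset_rowr N L T i j v d : (0 < N)%N -> (0 < L - N)%N ->
  gget N L (gset N L T i j v) (i + d * N%:Z) (j - d * Kz N L + 1) =
  omap (fun x => x + d * N%:Z) (gget N L T i (j + 1)).
Proof.
move=> hN hK.
have -> : j - d * Kz N L + 1 = (j + 1) - d * Kz N L by ring.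
rewrite gget_shift // gget_gset_other //; move=> d' [e1 e2].
have hN' : 0 < N%:Z by rewrite ltz_nat.
have : d' = 0 by nia.
by move=> h0; move: e2; rewrite h0 mul0r subr0; lia.
Qed.

Lemma gget_gset_rowl N L T i j v d : (0 < N)%N -> (0 < L - N)%N ->
  gget N L (gset N L T i j v) (i + d * N%:Z) (j - 1 - d * Kz N L) =
  omap (fun x => x + d * N%:Z) (gget N L T i (j - 1)).
Proof.
move=> hN hK.
rewrite gget_shift // gget_gset_other //; move=> d' [e1 e2].
have hN' : 0 < N%:Z by rewrite ltz_nat.
have : d' = 0 by nia.
by move=> h0; move: e2; rewrite h0 mul0r subr0; lia.
Qed.

Lemma inv_gset N L T i j v : (0 < N)%N -> (0 < L - N)%N -> Inv N L T ->
  ctop N L j <= i ->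
  (i %/ N%:Z)%Z * N%:Z < v ->
  (forall a y, a < i -> gget N L T a j = Some y -> y < v) ->
  (forall b y, i < b -> gget N L T b j = Some y -> v < y) ->
  (forall y, gget N L T i (j - 1) = Some y -> y <= v) ->
  (forall y, gget N L T i (j + 1) = Some y -> v <= y) ->
  (forall a, ctop N L j <= a -> a < i -> gget N L T a j != None) ->
  (ctop N L (j - 1) <= i -> gget N L T i (j - 1) != None) ->
  Inv N L (gset N L T i j v).
Proof.
move=> hN hK I hreg LP LA LB LL LR LC LS.
have hr := ctop_reg hN hK hreg.
have hN0 : N%:Z != 0 by rewrite eqz_nat -lt0n.
have hN' : 0 < N%:Z by rewrite ltz_nat.
have orb d : gget N L (gset N L T i j v) (i + d * N%:Z) (j - d * Kz N L) = Some (v + d * N%:Z).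
  exact: gget_gset_orb.
split.
- move=> i0 j0 x; case: (@orbit_cases N L i j i0 j0 hN) => [[d [e1 e2]]|no].
    subst i0 j0; rewrite orb => -[<-].
    rewrite (addrC i) divzMDl // mulrDl; lia.
  rewrite gget_gset_other //; exact: (i_pos I).
- move=> a b j0 x y ab; case: (@orbit_cases N L i j a j0 hN) => [[d [e1 e2]]|noa].
    subst a j0; rewrite orb => -[<-].
    rewrite gget_gset_col //; last by apply/eqP; lia.
    case E: (gget _ _ _ _ _) => [y'|] //= [<-].
    have := LB _ _ _ E; lia.
  case: (@orbit_cases N L i j b j0 hN) => [[d [e1 e2]]|nob].
    subst b j0; rewrite [X in X = Some y -> _]orb => Ha [<-].
    move: Ha; rewrite gget_gset_col //; last by apply/eqP; lia.
    case E: (gget _ _ _ _ _) => [x'|] //= [<-].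
    have := LA _ _ _ E; lia.
  rewrite !gget_gset_other //; exact: (i_cs I).
- move=> i0 j0 x y; case: (@orbit_cases N L i j i0 j0 hN) => [[d [e1 e2]]|no].
    subst i0 j0; rewrite orb => -[<-]; rewrite gget_gset_rowr //.
    case E: (gget _ _ _ _ _) => [y'|] //= [<-].
    have := LR _ E; lia.
  case: (@orbit_cases N L i j i0 (j0 + 1) hN) => [[d [e1 e2]]|no2].
    have e3 : j0 = j - 1 - d * Kz N L by move: e2; lia.
    subst i0 j0; rewrite gget_gset_rowl //.
    case E: (gget _ _ _ _ _) => [x'|] //= [<-].
    have -> : j - 1 - d * Kz N L + 1 = j - d * Kz N L by ring.
    rewrite orb => -[<-]; have := LL _ E; lia.
  rewrite !gget_gset_other //; exact: (i_rw I).
- move=> a b j0 h1 h2; case: (@orbit_cases N L i j a j0 hN) => [[d [e1 e2]]|noa].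
    by subst a j0; rewrite orb.
  case: (@orbit_cases N L i j b j0 hN) => [[d [e1 e2]]|nob].
    subst b j0 => _.
    have ha : a - d * N%:Z != i.
      apply/eqP => ea; apply: (noa d); split => //; move: ea; lia.
    rewrite gget_gset_col //.
    move: h1; rewrite ctop_shift // => h1.
    have hlt : a - d * N%:Z < i.
      have : a != i + d * N%:Z by apply/eqP => ea; apply: (noa d).
      move=> /eqP; lia.
    have := LC (a - d * N%:Z) ltac:(lia) hlt.
    by case: (gget _ _ _ _ _).
  rewrite !gget_gset_other //; exact: (i_cc I).
- move=> i0 j0 h1; case: (@orbit_cases N L i j i0 j0 hN) => [[d [e1 e2]]|no].
    by subst i0 j0; rewrite orb.
  case: (@orbit_cases N L i j i0 (j0 + 1) hN) => [[d [e1 e2]]|no2].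
    have e3 : j0 = j - 1 - d * Kz N L by move: e2; lia.
    subst i0 j0 => _; rewrite gget_gset_rowl //.
    move: h1; rewrite ctop_shift // => h1.
    have := LS ltac:(lia); by case: (gget _ _ _ _ _).
  rewrite !gget_gset_other //; exact: (i_sh I).
Qed.

Lemma divN_mono N a b : (0 < N)%N -> a <= b ->
  (a %/ N%:Z)%Z * N%:Z <= (b %/ N%:Z)%Z * N%:Z.
Proof.
move=> hN ab.
have [e1 [e2 e3]] := divz_facts a hN.
have [f1 [f2 f3]] := divz_facts b hN.
move: e1 e2 e3 f1 f2 f3.
move: (a %/ N%:Z)%Z (a %% N%:Z)%Z (b %/ N%:Z)%Z (b %% N%:Z)%Z => p r q s.
have hN' : 0 < N%:Z by rewrite ltz_nat.
move: (N%:Z) hN' => n hn e1 e2 e3 f1 f2 f3.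
have : p * n < (q + 1) * n by nia.
move=> h; have : p <= q by nia.
move=> h2; nia.
Qed.

Lemma divN_small N a : (0 < N)%N -> 0 <= a -> a < N%:Z -> (a %/ N%:Z)%Z = 0.
Proof.
move=> hN h1 h2.
have [e1 [e2 e3]] := divz_facts a hN.
move: e1 e2 e3; move: (a %/ N%:Z)%Z (a %% N%:Z)%Z => p r.
have hN' : 0 < N%:Z by rewrite ltz_nat.
move: (N%:Z) hN' h2 => n hn h2 e1 e2 e3; nia.
Qed.

Lemma ctop0 N L : ctop N L 0 = 0.
Proof. by rewrite /ctop /col_top div0z oppr0 mul0r. Qed.

Lemma ctopm1 N L : (0 < L - N)%N -> ctop N L (0 - 1) = N%:Z.
Proof.
move=> hK; rewrite /ctop /col_top sub0r.
have -> : ((-1) %/ (L - N)%N%:Z)%Z = -1.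
  have [f1 [f2 f3]] := divz_facts (-1) hK.
  move: f1 f2 f3; move: ((-1) %/ (L-N)%N%:Z)%Z ((-1) %% (L-N)%N%:Z)%Z => a r.
  have hK' : 0 < (L - N)%N%:Z by rewrite ltz_nat.
  move: (L - N)%N%:Z hK' => k hk f1 f2 f3; nia.
by rewrite opprK mul1r.
Qed.

Lemma col0 N L T : (0 < N)%N -> (0 < L - N)%N -> Inv N L T ->
  forall (r : nat) y, gget N L T r%:Z 0 = Some y -> r%:Z + 1 <= y.
Proof.
move=> hN hK I; elim=> [|r IH] y E.
  have := i_pos I E; rewrite div0z mul0r; lia.
have : gget N L T r%:Z 0 != None.
  apply: (i_cc I (b := r.+1%:Z)); rewrite ?ctop0 //; first by lia.
  by rewrite E.
case E2: (gget _ _ _ _ _) => [y0|] // _.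
have := IH _ E2; have := i_cs (a := r%:Z) (b := r.+1%:Z) I ltac:(lia) E2 E; lia.
Qed.

Definition MS N L T v j : Prop := Inv N L T /\
  ((j = 0 /\ 1 <= v <= N%:Z) \/
   (0 < j /\ exists ip u, ip < N%:Z /\ gget N L T ip (j - 1) = Some u /\ u <= v /\
      (forall y, gget N L T ip j = Some y -> v <= y))).

Lemma place_inv N L T v j i : (0 < N)%N -> (0 < L - N)%N -> MS N L T v j ->
  ctop N L j <= i ->
  (forall a, ctop N L j <= a -> a < i -> gget N L T a j != None) ->
  (forall a y, a < i -> gget N L T a j = Some y -> y < v) ->
  (forall b y, i < b -> gget N L T b j = Some y -> v < y) ->
  (forall y, gget N L T i (j + 1) = Some y -> v <= y) ->
  [/\ Inv N L (gset N L T i j v), i < N%:Z, 0 <= j & (j = 0 -> 0 <= i)].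
Proof.
move=> hN hK [I M] hreg HF HL LB LR.
have hN' : 0 < N%:Z by rewrite ltz_nat.
have hK' : 0 < Kz N L by rewrite ltz_nat.
case: M => [[j0 /andP[v1 vN]]|[jp [ip [u [ipN [Eu [uv Hip]]]]]]].
  subst j; move: hreg; rewrite ctop0 => i0.
  have iN : i < N%:Z.
    rewrite ltNge; apply/negP => iN.
    have := HF (N%:Z - 1) ltac:(rewrite ctop0; lia) ltac:(lia).
    case E: (gget _ _ _ _ _) => [y|] // _.
    have := HL (N%:Z - 1) _ ltac:(lia) E.
    have hNm : N%:Z - 1 = (N.-1)%:Z by rewrite -subn1; lia.
    move: E; rewrite hNm => E; have := col0 hN hK I E; lia.
  split => //; apply: inv_gset => //.
  - by rewrite ctop0.
  - rewrite divN_small //; rewrite mul0r; lia.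
  - by move=> y; rewrite sub0r gget_m1.
  - by rewrite ctopm1 //; lia.
have iip : i <= ip.
  rewrite leNgt; apply/negP => iip.
  have c1 := gget_ctop hN hK Eu.
  have c2 := @ctop_succ N L (j - 1) hK.
  move: c2; rewrite subrK => c2.
  have := HF ip ltac:(lia) iip.
  case E: (gget _ _ _ _ _) => [y|] // _.
  have := Hip _ E; have := HL _ _ iip E; lia.
have cs : forall y, gget N L T i (j - 1) = Some y -> y <= u.
  move=> y E; case: (ltrP i ip) => h.
    by have := i_cs I h E Eu; lia.
  have eq : i = ip by lia.
  by move: E; rewrite eq Eu => -[->].
split => //; try lia; apply: inv_gset => //.
- have := divN_mono hN iip; have := i_pos I Eu; lia.
- by move=> y E; have := cs _ E; lia.
- move=> h; apply: (i_cc I (b := ip)) => //; by rewrite Eu.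
Qed.

Lemma bump_step N L T v j i x : (0 < N)%N -> (0 < L - N)%N -> MS N L T v j ->
  gget N L T i j = Some x -> v <= x ->
  (forall i' y, i' < i -> gget N L T i' j = Some y -> y < v) ->
  [/\ i < N%:Z, 0 <= j, (j = 0 -> 0 <= i) & MS N L (gset N L T i j v) x (j + 1)].
Proof.
move=> hN hK M Ex vx HL.
have I := M.1.
have hreg := gget_ctop hN hK Ex.
have [I' iN j0 ji] := @place_inv N L T v j i hN hK M hreg
  (fun a h1 h2 => i_cc I h1 (ltW h2) ltac:(by rewrite Ex)) HL
  (fun b y h E => le_lt_trans vx (i_cs I h Ex E))
  (fun y E => le_trans vx (i_rw I Ex E)).
split => //; split => //; right; split; first by lia.
exists i, v; split => //; split.
  by rewrite addrK; apply: gget_gset_base => //; apply: ctop_reg.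
split => // y.
have h := @gget_gset_rowr N L T i j v 0 hN hK.
rewrite mul0r addr0 subr0 in h; rewrite h.
case E: (gget _ _ _ _ _) => [y'|] //= [<-].
have := i_rw I Ex E; lia.
Qed.

Lemma append_step N L T v j i : (0 < N)%N -> (0 < L - N)%N -> MS N L T v j ->
  (forall i' y, gget N L T i' j = Some y -> y < v) ->
  col_end N L T j i ->
  [/\ i < N%:Z, 0 <= j, (j = 0 -> 0 <= i) & Inv N L (gset N L T i j v)].
Proof.
move=> hN hK M HL [CE1 CE2].
have I := M.1.
have hreg : ctop N L j <= i.
  case: CE2 => [-> //|]; case E: (gget _ _ _ _ _) => [y|] // _.
  have := gget_ctop hN hK E; lia.
have HF : forall a, ctop N L j <= a -> a < i -> gget N L T a j != None.
  move=> a h1 h2; case: CE2 => [e|h]; first by rewrite /ctop in h1; lia.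
  apply: (i_cc I (b := i - 1)) => //; first by lia.
  by apply/eqP.
have [I' iN j0 ji] := @place_inv N L T v j i hN hK M hreg HF
  (fun a y _ E => HL a y E)
  (fun b y h E => ltac:(have := CE1 b ltac:(by rewrite E); lia))
  (fun y E => ltac:(have := i_sh I hreg ltac:(by rewrite E);
                    case E2: (gget _ _ _ _ _) => [z|] // _;
                    have := CE1 i ltac:(by rewrite E2); lia)).
by split.
Qed.

Lemma col_end_ctop N L T j i : (0 < N)%N -> (0 < L - N)%N ->
  col_end N L T j i -> ctop N L j <= i.
Proof.
move=> hN hK [_ CE2]; case: CE2 => [-> //|]; case E: (gget _ _ _ _ _) => [y|] // _.
have := gget_ctop hN hK E; lia.
Qed.

Lemma ins_inv N L T v j T' p : (0 < N)%N -> (0 < L - N)%N ->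
  ins_from N L T v j T' p -> MS N L T v j ->
  Inv N L T' /\ all (fun c => c.1 < N%:Z) p.
Proof.
move=> hN hK; elim=> {T v j T' p}.
  move=> T v j i x T' p Ex vx HL _ IH M.
  have [iN _ _ M'] := bump_step hN hK M Ex vx HL.
  have [I' Hp] := IH M'; split => //=; by rewrite iN.
move=> T v j i HL CE M.
have [iN _ _ I'] := append_step hN hK M HL CE.
by split => //=; rewrite iN.
Qed.

Lemma insert_inv N L T b T' p : (0 < N)%N -> (0 < L - N)%N ->
  Inv N L T -> (0 < b <= N)%N -> insert N L T b T' p ->
  Inv N L T' /\ all (fun c => c.1 < N%:Z) p.
Proof.
move=> hN hK I hb H; apply: (ins_inv hN hK H); split => //; left; split => //; lia.
Qed.

Lemma run_nth N L T bs T' ps : (0 < N)%N -> (0 < L - N)%N ->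
  run N L T bs T' ps -> Inv N L T -> (forall b, b \in bs -> (0 < b <= N)%N) ->
  forall k, (k.+1 < size bs)%N ->
  exists Ta Tb Tc, [/\ Inv N L Ta, insert N L Ta (nth 0%N bs k) Tb (nth [::] ps k)
     & insert N L Tb (nth 0%N bs k.+1) Tc (nth [::] ps k.+1)].
Proof.
move=> hN hK; elim=> {T bs T' ps} [T|T b bs T1 T2 p ps Hi Hr IH] I Hb k hk //.
have [I1 _] := insert_inv hN hK I (Hb b (mem_head _ _)) Hi.
case: k hk => [|k] hk.
  inversion Hr; subst; first by [].
  by exists T, T1, T3.
have := IH I1 (fun b0 h => Hb b0 ltac:(by rewrite in_cons h orbT)) k hk.
by [].
Qed.

Lemma ins_cols N L T v j T' p : ins_from N L T v j T' p ->
  forall c, c \in p -> j <= c.2.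
Proof.
elim=> {T v j T' p}.
  move=> T v j i x T' p _ _ _ _ IH c; rewrite in_cons => /orP [/eqP -> //|/IH].
  move=> h; lia.
by move=> T v j i _ _ c; rewrite mem_seq1 => /eqP ->.
Qed.

Lemma ins_change N L T v j T' p : (0 < N)%N -> (0 < L - N)%N ->
  ins_from N L T v j T' p ->
  forall i0 j0 z, gget N L T' i0 j0 = Some z ->
  gget N L T i0 j0 = Some z \/
  exists r a d w, [/\ (r, a) \in p, i0 = r + d * N%:Z, j0 = a - d * Kz N L,
                      z = w + d * N%:Z & v <= w].
Proof.
move=> hN hK; elim=> {T v j T' p}.
  move=> T v j i x T' p Ex vx HL _ IH i0 j0 z E.
  have hr := gget_reg Ex.
  case: (IH _ _ _ E) => [E1|[r [a [d [w [h1 h2 h3 h4 h5]]]]]]; last first.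
    right; exists r, a, d, w; split => //; first by rewrite in_cons h1 orbT.
    exact: le_trans vx h5.
  case: (@orbit_cases N L i j i0 j0 hN) => [[d [e1 e2]]|no].
    subst i0 j0; move: E1; rewrite gget_gset_orb // => -[<-].
    right; exists i, j, d, v; split => //; by rewrite mem_head.
  by left; rewrite -(gget_gset_other T v hN no).
move=> T v j i HL CE i0 j0 z E.
have hr := ctop_reg hN hK (col_end_ctop hN hK CE).
case: (@orbit_cases N L i j i0 j0 hN) => [[d [e1 e2]]|no].
  subst i0 j0; move: E; rewrite gget_gset_orb // => -[<-].
  right; exists i, j, d, v; split => //; by rewrite mem_head.
by left; rewrite -(gget_gset_other T v hN no).
Qed.

Lemma ins_unchanged N L T v j T' p i0 j0 : (0 < N)%N ->
  ins_from N L T v j T' p ->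
  (forall r a d, (r, a) \in p -> ~ (i0 = r + d * N%:Z /\ j0 = a - d * Kz N L)) ->
  gget N L T' i0 j0 = gget N L T i0 j0.
Proof.
move=> hN; elim=> {T v j T' p}.
  move=> T v j i x T' p Ex vx HL _ IH H.
  rewrite IH; last by move=> r a d h; apply: H; rewrite in_cons h orbT.
  by apply: gget_gset_other => // d; apply: H; rewrite mem_head.
move=> T v j i HL CE H.
by apply: gget_gset_other => // d; apply: H; rewrite mem_head.
Qed.

Lemma gset_right N L T i j v i0 j0 : (0 < N)%N -> (0 < L - N)%N ->
  i < N%:Z -> 0 <= i0 -> j + 1 <= j0 ->
  gget N L (gset N L T i j v) i0 j0 = gget N L T i0 j0.
Proof.
move=> hN hK iN i0p jj; apply: gget_gset_other => // d [e1 e2].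
have hK' : 0 < Kz N L by rewrite ltz_nat.
have hN' : 0 < N%:Z by rewrite ltz_nat.
have : d <= -1 by nia.
move=> hd; nia.
Qed.

Lemma w1_facts N L T v j T' p : (0 < N)%N -> (0 < L - N)%N ->
  ins_from N L T v j T' p -> MS N L T v j ->
  all (fun c => (0 <= c.1) && (c.1 < N%:Z)) p ->
  exists J (r : int -> int), [/\ j <= J,
    (forall j0, j <= j0 <= J -> 0 <= r j0 < N%:Z),
    (forall j0, j <= j0 < J -> forall i x, r j0 < i -> gget N L T' i j0 = Some x ->
        exists z, gget N L T' (r (j0 + 1)) (j0 + 1) = Some z /\ z < x),
    (forall i, r J < i -> gget N L T' i J = None) &
    gget N L T' (r j) j = Some v].
Proof.
move=> hN hK; elim=> {T v j T' p}.
  move=> T v j i x T' p Ex vx HL Hins IH M /= /andP [/andP [i0 iN] Hp].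
  have I := M.1.
  have [_ _ _ M'] := bump_step hN hK M Ex vx HL.
  have [J [r [jJ Hr Hpair Hlast Hhead]]] := IH M' Hp.
  have hN' : 0 < N%:Z by rewrite ltz_nat.
  have hK' : 0 < Kz N L by rewrite ltz_nat.
  have cols := ins_cols Hins.
  exists J, (fun j0 => if j0 == j then i else r j0); split.
  - lia.
  - move=> j0 /andP [h1 h2]; case: eqP => [_|ne] /=; first by lia.
    apply: Hr; apply/andP; split => //.
    have : j0 != j by apply/eqP. lia.
  - move=> j0 /andP [h1 h2] i1 x1.
    have -> : (j0 + 1 == j) = false by apply/eqP; lia.
    case: eqP => [e|ne].
      subst j0 => hi E1; exists x; split => //.
      case: (ins_change hN hK Hins E1) => [E2|[r0 [a [d [w [h1' h2' h3' h4' h5']]]]]].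
        move: E2; rewrite gget_gset_other //; last first.
          move=> d [e1 e2]; have : d = 0 by nia.
          move=> d0; move: e1; rewrite d0 mul0r addr0; lia.
        by move=> E2; apply: (i_cs I hi Ex E2).
      have := cols _ h1'; rewrite /= => ha.
      have : 1 <= d by nia.
      move=> hd; nia.
    have h3 : j + 1 <= j0.
      have : j0 != j by apply/eqP.
      lia.
    by apply: Hpair; lia.
  - have -> : (J == j) = false by apply/eqP; lia.
    exact: Hlast.
  - rewrite eqxx (ins_unchanged hN Hins); first by apply: gget_gset_base => //; exact: gget_reg Ex.
    move=> r0 a d h [e1 e2].
    have := cols _ h; rewrite /= => ha.
    have : 1 <= d by nia.
    have := allP Hp _ h; rewrite /= => /andP [r0p _].
    move=> hd; nia.
move=> T v j i HL CE M /= /andP [/andP [i0 iN] _].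
have [CE1 CE2] := CE.
have hr := ctop_reg hN hK (col_end_ctop hN hK CE).
have hK' : 0 < Kz N L by rewrite ltz_nat.
exists j, (fun _ => i); split => //.
- by move=> j0 _; lia.
- by move=> j0 h; lia.
- move=> i1 h; rewrite gget_gset_other //; last first.
    move=> d [e1 e2]; have : d = 0 by nia.
    move=> d0; move: e1; rewrite d0 mul0r addr0; lia.
  case E: (gget _ _ _ _ _) => [y|] //.
  have := CE1 i1 ltac:(by rewrite E); lia.
- exact: gget_gset_base.
Qed.

Lemma w2_rows N L T v j T' p : (0 < N)%N -> (0 < L - N)%N ->
  ins_from N L T v j T' p -> MS N L T v j ->
  forall J (r : int -> int), j <= J ->
    (forall j0, j <= j0 <= J -> 0 <= r j0 < N%:Z) ->
    (forall j0, j <= j0 < J -> forall i x, r j0 < i -> gget N L T i j0 = Some x ->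
        exists z, gget N L T (r (j0 + 1)) (j0 + 1) = Some z /\ z < x) ->
    (forall i, r J < i -> gget N L T i J = None) ->
    (exists z, gget N L T (r j) j = Some z /\ z < v) ->
    all (fun c => 0 <= c.1) p.
Proof.
move=> hN hK; elim=> {T v j T' p}.
  move=> T v j i x T' p Ex vx HL Hins IH M J r jJ Hr Hpair Hlast [z [Ez zv]].
  have I := M.1.
  have [iN _ _ M'] := bump_step hN hK M Ex vx HL.
  have rji : r j < i.
    rewrite ltNge; apply/negP => h.
    case: (ltrP i (r j)) => h2.
      by have := i_cs I h2 Ex Ez; lia.
    have e : i = r j by lia.
    by move: Ex; rewrite e Ez => -[ex]; lia.
  have r0 := Hr j ltac:(lia).
  have jJ' : j < J.
    rewrite lt_neqAle jJ andbT; apply/eqP => e; subst J.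
    by have := Hlast i rji; rewrite Ex.
  rewrite /= (_ : 0 <= i) /=; last by lia.
  apply: (IH M' J r) => //.
  - lia.
  - by move=> j0 h; apply: Hr; lia.
  - move=> j0 h i1 x1 h1; have r1 := Hr j0 ltac:(lia).
    rewrite gset_right //; try lia.
    move=> E; have [z1 [E1 z1x]] := Hpair j0 ltac:(lia) i1 x1 h1 E.
    have r2 := Hr (j0 + 1) ltac:(lia).
    by exists z1; rewrite gset_right //; lia.
  - move=> i1 h1; have r1 := Hr J ltac:(lia).
    by rewrite gset_right //; try lia; apply: Hlast.
  - have [z1 [E1 z1x]] := Hpair j ltac:(lia) i x rji Ex.
    have r2 := Hr (j + 1) ltac:(lia).
    by exists z1; rewrite gset_right //; lia.
move=> T v j i HL [CE1 CE2] M J r jJ Hr Hpair Hlast [z [Ez zv]].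
have := CE1 (r j) ltac:(by rewrite Ez).
have := Hr j ltac:(lia).
by rewrite /= andbT; lia.
Qed.

Lemma inv_empty N L : Inv N L empty_tab.
Proof.
have E : forall i j, gget N L empty_tab i j = None by move=> i j; rewrite /gget; case: ifP.
split.
- by move=> i j x; rewrite E.
- by move=> a b j x y _; rewrite E.
- by move=> i j x y; rewrite E.
- by move=> a b j _ _; rewrite E.
- by move=> i j _; rewrite E.
Qed.

Lemma main_aux (N L : nat) (d : seq (nat * nat)) (T : tab)
    (ps : seq (seq (int * int))) (k : nat) :
  (1 <= N)%N -> (1 <= L - N)%N ->
  innovation_data N d ->
  run N L empty_tab (map snd d) T ps ->
  (k.+1 < size d)%N ->
  ((nth (0, 0) d k).2 < (nth (0, 0) d k.+1).2)%N ->
  interior N (nth [::] ps k) -> interior N (nth [::] ps k.+1).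
Proof.
move=> hN hK [_ ID2] R hk lt int1.
have Hb : forall b, b \in map snd d -> (0 < b <= N)%N.
  move=> b /(nthP 0%N) [k0 hk0 <-]; rewrite size_map in hk0.
  by rewrite (nth_map (0%N, 0%N)) //; apply: ID2.
have [Ta [Tb [Tc [Ia H1 H2]]]] := run_nth hN hK R (inv_empty N L) Hb (k := k) ltac:(by rewrite size_map).
rewrite !(nth_map (0%N, 0%N)) // in H1 H2; last by apply: ltnW.
have b1 := ID2 k (ltnW hk).
have b2 := ID2 k.+1 hk.
have M1 : MS N L Ta (nth (0%N, 0%N) d k).2%:Z 0.
  split => //; left; split => //; lia.
have [J [r [jJ Hr Hpair Hlast Hhead]]] := w1_facts hN hK H1 M1 int1.
have [Ib A1] := insert_inv hN hK Ia b1 H1.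
have [_ A2] := insert_inv hN hK Ib b2 H2.
have M2 : MS N L Tb (nth (0%N, 0%N) d k.+1).2%:Z 0.
  split => //; left; split => //; lia.
have hz : exists z, gget N L Tb (r 0) 0 = Some z /\ z < (nth (0%N, 0%N) d k.+1).2%:Z.
  by exists (nth (0%N, 0%N) d k).2%:Z; split => //; rewrite ltz_nat.
have A3 := w2_rows hN hK H2 M2 jJ Hr Hpair Hlast hz.
apply/allP => c hc; rewrite (allP A3 c hc) (allP A2 c hc).
done.
Qed.

Local Close Scope ring_scope.
Unset Implicit Arguments.

Theorem lemma3p1 (N L : nat) (d : seq (nat * nat)) (T : tab)
    (ps : seq (seq (int * int))) (k : nat) :
  (1 <= N)%N -> (1 <= L - N)%N ->
  innovation_data N d ->
  run N L empty_tab (map snd d) T ps ->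
  (k.+1 < size d)%N ->
  (nth (0, 0) d k).1 = (nth (0, 0) d k.+1).1 ->
  ((nth (0, 0) d k).2 < (nth (0, 0) d k.+1).2)%N ->
  ~ (interior N (nth [::] ps k) /\ cylindrical N (nth [::] ps k.+1)).
Proof.
move=> hN hK ID R hk _ lt [i1 c2].
by move: c2; rewrite /cylindrical (main_aux hN hK ID R hk lt i1).
Qed.
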